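(* Let $r\geq k+1$. Let $\mathcal{P}$ be a finite classical polar space of rank $r$ with parameter $e$ naturally embedded in $V(n,q)$, and let $H$ be a degenerate hyperplane of $\mathcal{P}$ in $V(n,q)$. Then the number of $k$-spaces of $\mathcal{P}$ contained in $H$ equals \[ \frac{q^{2r+e-k-1}+q^r-q^{r+e-1}-1}{(q^r-1)(q^{r+e-1}+1)} \] times the total number of $k$-spaces of $\mathcal{P}$.
   Context: A finite classical polar space is the geometry of totally isotropic (totally singular) subspaces of $V(n,q)=\mathbb{F}_q^n$ with respect to a non-degenerate quadratic form or non-degenerate reflexive sesquilinear form, with associated polarity $\perp$. Dimensions are algebraic: a $k$-space of $\mathcal{P}$ is a totally isotropic subspace of vector dimension $k$; the rank $r$ is the maximal such dimension and generators are the $r$-spaces. The parameter $e$ is defined by the property that every $(r-1)$-space lies in exactly $q^e+1$ generators ($e=0$ for $Q^+(2r-1,q)$, $1/2$ for $H(2r-1,q)$, $1$ for $W(2r-1,q)$ and $Q(2r,q)$, $3/2$ for $H(2r,q)$, $2$ for $Q^-(2r+1,q)$). A degenerate hyperplane of $\mathcal{P}$ is a hyperplane $H$ of $V(n,q)$ of the form $H=P^\perp$ for a point (1-space) $P$ of $\mathcal{P}$, i.e. a tangent hyperplane; then $H\cap\mathcal{P}$ is a cone with vertex $P$ over a polar space of the same type with rank $r-1$. *)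

(* Defs.v *)
(* finite classical polar spaces over a finite field F,
   living in V(n,q) = 'rV[F]_n, subspaces represented by square matrices
   (row spaces), canonically normalised via <<_>>%MS. *)
From HB Require Import structures.
From mathcomp Require Import all_boot all_order all_algebra.
Set Implicit Arguments. Unset Strict Implicit. Unset Printing Implicit Defensive.
Import GRing.Theory Num.Theory.
Local Open Scope ring_scope.

Section Polar.
Variables (F : finFieldType) (n : nat).

(* The form defining the polar space:
   - QuadForm M : quadratic form Q(v) = v M v^T (orthogonal polar spaces);
   - AltForm M  : alternating bilinear form u M v^T (symplectic);
   - HermForm s M : Hermitian form u M (s v)^T, s an involutory automorphism. *)
Inductive polar_form :=
| QuadForm of 'M[F]_n
| AltForm of 'M[F]_n
| HermForm of {rmorphism F -> F} & 'M[F]_n.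

Definition qform (M : 'M[F]_n) (v : 'rV[F]_n) : F := (v *m M *m v^T) 0 0.
Definition bilin (M : 'M[F]_n) (u v : 'rV[F]_n) : F := (u *m M *m v^T) 0 0.
Definition sesq (s : {rmorphism F -> F}) (M : 'M[F]_n) (u v : 'rV[F]_n) : F :=
  (u *m M *m (map_mx s v)^T) 0 0.

Definition pform (pf : polar_form) : 'rV[F]_n -> 'rV[F]_n -> F :=
  match pf with
  | QuadForm M => fun u v => qform M (u + v) - qform M u - qform M v
  | AltForm M => bilin M
  | HermForm s M => sesq s M
  end.

Definition nondeg (pf : polar_form) : Prop :=
  match pf with
  | QuadForm M => forall v, qform M v = 0 -> (forall u, pform pf u v = 0) -> v = 0
  | AltForm M => M^T = - M /\ (forall i, M i i = 0) /\ \det M != 0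
  | HermForm s M => (forall x, s (s x) = x) /\ (exists x, s x != x) /\
                    M^T = map_mx s M /\ \det M != 0
  end.

Definition tot_iso (pf : polar_form) m (U : 'M[F]_(m, n)) : bool :=
  match pf with
  | QuadForm M => [forall u : 'rV[F]_n, (u <= U)%MS ==> (qform M u == 0)]
  | _ => [forall u : 'rV[F]_n, forall v : 'rV[F]_n,
            (u <= U)%MS ==> (v <= U)%MS ==> (pform pf u v == 0)]
  end.

(* subspaces of V(n,q), one canonical matrix per subspace *)
Definition is_subspace (U : 'M[F]_n) : bool := (<<U>>%MS == U).

(* the k-spaces (vector dimension k) of the polar space *)
Definition kspaces (pf : polar_form) (k : nat) : {set 'M[F]_n} :=
  [set U : 'M[F]_n | [&& is_subspace U, \rank U == k & tot_iso pf U]].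

Definition polar_rank (pf : polar_form) (r : nat) : Prop :=
  (exists U : 'M[F]_n, tot_iso pf U && (\rank U == r)) /\
  (forall U : 'M[F]_n, tot_iso pf U -> (\rank U <= r)%N).

(* every (r-1)-space lies in exactly qe+1 generators (qe plays q^e) *)
Definition gen_param (pf : polar_form) (r qe : nat) : Prop :=
  forall W : 'M[F]_n, tot_iso pf W -> \rank W = r.-1 ->
    #|[set G in kspaces pf r | (W <= G)%MS]| = qe.+1.

Definition in_perp (pf : polar_form) (p : 'rV[F]_n) (U : 'M[F]_n) : bool :=
  [forall u : 'rV[F]_n, (u <= U)%MS ==> (pform pf u p == 0)].

End Polar.

(* Main.v *)
Require Import Defs.
From HB Require Import structures.
From mathcomp Require Import all_boot all_order all_algebra.
From mathcomp Require Import zify ring.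
Set Implicit Arguments. Unset Strict Implicit. Unset Printing Implicit Defensive.
Import GRing.Theory Num.Theory.
Local Open Scope ring_scope.

Section Count.
Variables (F : finFieldType) (n : nat).
Local Notation q := #|F|.

Lemma card_rs m (A : 'M[F]_(m, n)) :
  (\sum_(x : 'rV[F]_n | (x <= A)%MS) 1 = q ^ \rank A)%N.
Proof.
rewrite sum1_card.
pose f := fun y : 'rV[F]_(\rank A) => y *m row_base A.
have injf : injective f by apply: row_free_inj; exact: row_base_free.
have eqp : [pred x : 'rV[F]_n | (x <= A)%MS] =i f @: [set: 'rV[F]_(\rank A)].
  move=> x; rewrite !inE; apply/idP/imsetP.
    rewrite -(eq_row_base A) => /submxP[D ->]; by exists D.
  by case=> y _ ->; rewrite /f -(eq_row_base A) submxMl.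
rewrite (eq_card eqp).
by rewrite card_imset // cardsT card_mx mul1n.
Qed.

Lemma rank_add_row (C : 'M[F]_n) (y : 'rV[F]_n) :
  \rank (C + y)%MS = (\rank C + ~~ (y <= C)%MS)%N.
Proof.
have h1 := mxrank_leqif_sup (addsmxSl C y).
have h2 : (\rank (C + y)%MS <= \rank C + 1)%N.
  apply: leq_trans (mxrank_adds_leqif C y) _.
  by rewrite leq_add2l rank_leq_row.
have e : (C + y <= C)%MS = (y <= C)%MS by rewrite addsmx_sub submx_refl.
case: h1 => h1a h1b; rewrite e in h1b.
case: (boolP (y <= C)%MS) h1b => hy h1b /=.
  by apply/eqP; rewrite addn0 eq_sym h1b.
have : \rank C != \rank (C + y)%MS by rewrite h1b.
lia.
Qed.

Definition Tc (A B : 'M[F]_n) k :=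
  (\sum_(X : 'M[F]_(k, n) | (X <= A)%MS && (\rank (B + X)%MS == \rank B + k)%N) 1)%N.

Definition Pr a b k := (\prod_(i < k) (q ^ a - q ^ (b + i)))%N.

Lemma col_eq (B : 'M[F]_n) k (y : 'rV[F]_n) (Z : 'M[F]_(k, n)) :
  (B + col_mx y Z :=: (B + Z) + y)%MS.
Proof.
apply/eqmxP/andP; split.
  rewrite addsmx_sub col_mx_sub.
  rewrite (submx_trans (addsmxSl B Z) (addsmxSl _ _)) addsmxSr.
  by rewrite (submx_trans (addsmxSr B Z) (addsmxSl _ _)).
rewrite !addsmx_sub addsmxSl.
have h : (col_mx y Z <= B + col_mx y Z)%MS by exact: addsmxSr.
by rewrite col_mx_sub in h; case/andP: h => -> ->.
Qed.

Lemma Tc0 (A B : 'M[F]_n) : Tc A B 0 = 1%N.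
Proof.
rewrite /Tc (eq_bigl xpredT) ?sum1_card ?card_mx //.
move=> X; rewrite (flatmx0 X) sub0mx /= addn0.
by rewrite (addsmx0 _ B) eqxx.
Qed.

Lemma sum_notin (A C : 'M[F]_n) : (C <= A)%MS ->
  (\sum_(y : 'rV[F]_n | (y <= A)%MS && ~~ (y <= C)%MS) 1 = q ^ \rank A - q ^ \rank C)%N.
Proof.
move=> sCA.
have := card_rs A; rewrite (bigID (fun y : 'rV[F]_n => (y <= C)%MS)) /=.
rewrite (eq_bigl (fun y : 'rV[F]_n => (y <= C)%MS)) ?card_rs.
  by move=> <-; rewrite addKn.
by move=> y /=; apply/andP/idP => [[]//|h]; split => //; exact: submx_trans sCA.
Qed.

Lemma TcS (A B : 'M[F]_n) k : (B <= A)%MS ->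
  Tc A B k.+1 = (Tc A B k * (q ^ \rank A - q ^ (\rank B + k)))%N.
Proof.
move=> sBA; rewrite /Tc.
pose h := fun p : 'M[F]_(k, n) * 'rV[F]_n => (col_mx p.2 p.1 : 'M[F]_(1 + k, n)).
rewrite (reindex h); last first.
  apply: onW_bij _ _; exists (fun X : 'M[F]_(1 + k, n) => (dsubmx X, usubmx X)).
    by case=> Z y; rewrite /h /= col_mxKd col_mxKu.
  by move=> X; rewrite /h /= vsubmxK.
rewrite -(pair_big_dep xpredT (fun Z y => 
   (col_mx y Z <= A)%MS && (\rank (B + col_mx y Z)%MS == \rank B + k.+1)%N)
   (fun _ _ => 1%N)) /=.
rewrite big_distrl /= big_mkcond [in RHS]big_mkcond /=.
apply: eq_bigr => Z _.
have rle : (\rank (B + Z)%MS <= \rank B + k)%N.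
  apply: leq_trans (mxrank_adds_leqif B Z) _.
  by rewrite leq_add2l rank_leq_row.
have key : forall y : 'rV[F]_n,
   ((col_mx y Z <= A)%MS && (\rank (B + col_mx y Z)%MS == \rank B + k.+1)%N)
   = [&& (Z <= A)%MS, (\rank (B + Z)%MS == \rank B + k)%N,
         (y <= A)%MS & ~~ (y <= B + Z)%MS].
  move=> y; rewrite col_mx_sub (col_eq B y Z) rank_add_row.
  case: (y <= A)%MS; case: (Z <= A)%MS; rewrite ?andbF ?andbT //=.
  case: (y <= B + Z)%MS => /=; rewrite ?andbF ?andbT.
    by apply/negbTE/eqP; lia.
  by apply/eqP/eqP; lia.
rewrite (eq_bigl _ _ key).
case: ifP => [/andP[sZA /eqP rZ]|hZ].
  rewrite mul1n (eq_bigl (fun y : 'rV[F]_n => (y <= A)%MS && ~~ (y <= B + Z)%MS)).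
    by rewrite sum_notin ?rZ // addsmx_sub sBA.
  by move=> y; rewrite sZA rZ eqxx.
rewrite big_pred0 // => y.
by move: hZ; case: (Z <= A)%MS; case: (_ == _).
Qed.

Lemma Tc_Pr (A B : 'M[F]_n) k : (B <= A)%MS -> Tc A B k = Pr (\rank A) (\rank B) k.
Proof.
move=> sBA; elim: k => [|k IH]; first by rewrite Tc0 /Pr big_ord0.
by rewrite TcS // IH /Pr big_ord_recr.
Qed.

Lemma subspace_eq (H : 'M[F]_n) m (C : 'M[F]_(m, n)) :
  is_subspace H -> (C <= H)%MS -> \rank C = \rank H -> <<C>>%MS = H.
Proof.
move=> /eqP sH sCH rC; rewrite -sH; apply/genmxP.
by rewrite -(mxrank_leqif_eq sCH) rC.
Qed.

Lemma fiber (A B : 'M[F]_n) k (P : pred 'M[F]_n) : (B <= A)%MS ->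
 (\sum_(H : 'M[F]_n | [&& is_subspace H, (B <= H)%MS, (H <= A)%MS,
        (\rank H == \rank B + k)%N & P H]) Pr (\rank B + k) (\rank B) k
  = \sum_(X : 'M[F]_(k, n) | [&& (X <= A)%MS, (\rank (B + X)%MS == \rank B + k)%N
        & P <<(B + X)%MS>>%MS]) 1)%N.
Proof.
move=> sBA.
rewrite (partition_big (fun X : 'M[F]_(k, n) => <<(B + X)%MS>>%MS)
  (fun H => [&& is_subspace H, (B <= H)%MS, (H <= A)%MS,
        (\rank H == \rank B + k)%N & P H])); last first.
  move=> X /and3P[sXA rX PX]; rewrite /is_subspace genmx_id eqxx /=.
  by rewrite !genmxE addsmxSl addsmx_sub sBA sXA rX PX.
symmetry; apply: eq_bigr => H /and5P[sH sBH sHA /eqP rH PH].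
rewrite -rH -(Tc_Pr k sBH) /Tc rH; apply: eq_bigl => X.
apply/idP/idP.
  case/andP=> /and3P[_ rX _] /eqP eH.
  by rewrite -eH genmxE addsmxSr rX.
case/andP=> sXH /eqP rX.
have sBXH : (B + X <= H)%MS by rewrite addsmx_sub sBH.
have eH : <<(B + X)%MS>>%MS = H by apply: subspace_eq => //; rewrite rX rH.
by rewrite (submx_trans sXH sHA) rX eqxx eH PH eqxx.
Qed.

Lemma q_gt1 : (1 < q)%N.
Proof. exact: card_finNzRing_gt1. Qed.

Lemma count_sub (A : 'M[F]_n) k :
  (\sum_(U | [&& is_subspace U, (U <= A)%MS & \rank U == k]) Pr k 0 k
    = Pr (\rank A) 0 k)%N.
Proof.
have e := fiber k predT (sub0mx n A).
transitivity (\sum_(H : 'M[F]_n | [&& is_subspace H, ((0%R : 'M[F]_n) <= H)%MS, (H <= A)%MS,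
        (\rank H == \rank (0%R : 'M[F]_n) + k)%N & predT H])
        Pr (\rank (0%R : 'M[F]_n) + k) (\rank (0%R : 'M[F]_n)) k)%N.
  by rewrite mxrank0 add0n; apply: eq_bigl => H; rewrite sub0mx andbT.
rewrite e; have := Tc_Pr k (sub0mx n A); rewrite mxrank0 => <-; rewrite /Tc.
apply: eq_bigl => X; rewrite andbT.
by rewrite (adds0mx _ X) mxrank0.
Qed.

Lemma Pr_gt0 j m : (0 < Pr (j + m) j m)%N.
Proof.
rewrite /Pr; apply: prodn_gt0 => i; rewrite subn_gt0 ltn_exp2l ?q_gt1 //.
by rewrite ltn_add2l.
Qed.

Lemma Pr_shift a j m : (Pr a.+1 j.+1 m = q ^ m * Pr a j m)%N.
Proof.
rewrite /Pr; elim: m => [|m IH]; first by rewrite !big_ord0.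
rewrite !big_ord_recr /= IH addSn !expnS -mulnBr.
by ring.
Qed.

Lemma count_hyp (G U : 'M[F]_n) (x : 'rV[F]_n) m :
  (U + x <= G)%MS -> ~~ (x <= U)%MS -> \rank G = (\rank U + m).+1 ->
  (\sum_(H | [&& is_subspace H, (U <= H)%MS, (H <= G)%MS,
       (\rank H == \rank U + m)%N & ~~ (x <= H)%MS]) 1 = q ^ m)%N.
Proof.
move=> sUxG nxU rG.
have sUG : (U <= G)%MS by apply: submx_trans (addsmxSl U x) sUxG.
have := fiber m (fun H => ~~ (x <= H)%MS) sUG.
rewrite sum_nat_const sum1_card /= => e; rewrite sum1_card.
rewrite (@eq_card _ _ [pred X : 'M[F]_(m, n) | (X <= G)%MS &&
      (\rank ((U + x) + X)%MS == \rank (U + x)%MS + m)%N]) in e; last first.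
  move=> X; rewrite !inE.
  have rle : (\rank (U + X)%MS <= \rank U + m)%N.
    apply: leq_trans (mxrank_adds_leqif U X) _.
    by rewrite leq_add2l rank_leq_row.
  have e1 : ((U + x) + X :=: (U + X) + x)%MS.
    by rewrite -!addsmxA (addsmxC x X).
  rewrite unfold_in /= genmxE (e1) rank_add_row rank_add_row nxU.
  case: (X <= G)%MS => //=; case: (x <= U + X)%MS => /=.
    by rewrite andbF; apply/esym/negbTE/eqP; lia.
  by rewrite andbT; apply/eqP/eqP; lia.
have := e; rewrite -sum1_card -/(Tc G (U + x)%MS m) Tc_Pr //.
rewrite rG rank_add_row nxU addn1 Pr_shift mulnC => /eqP.
by rewrite [X in _ == X]mulnC eqn_pmul2l ?Pr_gt0 // => /eqP.
Qed.

End Count.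
Section Polar2.
Variables (F : finFieldType) (n : nat) (pf : polar_form F n).

Definition idr : {rmorphism F -> F} := idfun.

Definition sig : {rmorphism F -> F} :=
  match pf with HermForm s _ => s | _ => idr end.
Definition Nm : 'M[F]_n :=
  match pf with QuadForm M => M + M^T | AltForm M => M | HermForm _ M => M end.

Definition gf (u v : 'rV[F]_n) : F := (u *m Nm *m (map_mx sig v)^T) 0 0.

Lemma tr11 (A : 'M[F]_1) : A^T 0 0 = A 0 0.
Proof. by rewrite mxE. Qed.

Lemma addE (A B : 'M[F]_1) : (A + B) 0 0 = A 0 0 + B 0 0.
Proof. by rewrite mxE. Qed.

Lemma trE (M : 'M[F]_n) (a b : 'rV[F]_n) :
  (b *m M *m a^T) 0 0 = (a *m M^T *m b^T) 0 0.
Proof. by rewrite -tr11 !trmx_mul trmxK mulmxA. Qed.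

Lemma map_idr m (v : 'M[F]_(m, n)) : map_mx idr v = v.
Proof. by apply/matrixP => i j; rewrite mxE. Qed.

Lemma pformE u v : pform pf u v = gf u v.
Proof.
rewrite /gf /sig /Nm; case: pf => [M|M|s M] //=.
- rewrite /qform map_idr linearD /= !mulmxDl !mulmxDr !addE.
  rewrite (trE M u v) mulmxDl addE; ring.
- by rewrite /bilin map_idr.
Qed.

Lemma gfDl u1 u2 v : gf (u1 + u2) v = gf u1 v + gf u2 v.
Proof. by rewrite /gf !mulmxDl addE. Qed.
Lemma gfDr u v1 v2 : gf u (v1 + v2) = gf u v1 + gf u v2.
Proof. by rewrite /gf map_mxD linearD /= mulmxDr addE. Qed.
Lemma gfZl a u v : gf (a *: u) v = a * gf u v.
Proof. by rewrite /gf -!scalemxAl mxE. Qed.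
Lemma gfZr a u v : gf u (a *: v) = sig a * gf u v.
Proof. by rewrite /gf map_mxZ linearZ /= -scalemxAr mxE. Qed.

Definition Pmat m (U : 'M[F]_(m, n)) : 'M[F]_(n, m) := Nm *m (map_mx sig U)^T.
Definition perpmx m (U : 'M[F]_(m, n)) : 'M[F]_n := kermx (Pmat U).

Lemma gf_row m (U : 'M[F]_(m, n)) v i : (v *m Pmat U) 0 i = gf v (row i U).
Proof.
rewrite /Pmat /gf mulmxA !mxE; apply: eq_bigr => k _; by rewrite !mxE.
Qed.

Lemma perpP m (U : 'M[F]_(m, n)) v :
  reflect (forall u, (u <= U)%MS -> gf v u = 0) (v <= perpmx U)%MS.
Proof.
rewrite /perpmx sub_kermx; apply: (iffP eqP) => [H u /submxP[D ->]|H].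
  rewrite /gf map_mxM trmx_mul mulmxA -(mulmxA v Nm) -(mulmxA v).
  have -> : Nm *m (map_mx sig U)^T = Pmat U by [].
  by rewrite mulmxA H mul0mx mxE.
apply/matrixP => i j; rewrite (ord1 i) gf_row mxE; apply: H; exact: row_sub.
Qed.

Lemma perpmxP m (A : 'M[F]_(m, n)) m' (B : 'M[F]_(m', n)) :
  reflect (forall a b, (a <= A)%MS -> (b <= B)%MS -> gf a b = 0)
          (A <= perpmx B)%MS.
Proof.
apply: (iffP idP) => [sAP a b sa sb|H].
  by apply/(perpP _ _ (submx_trans sa sAP)).
apply/row_subP => i; apply/perpP => b sb; apply: H => //; exact: row_sub.
Qed.

Lemma rank_perp m (U : 'M[F]_(m, n)) : (n - \rank U <= \rank (perpmx U))%N.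
Proof.
rewrite /perpmx mxrank_ker leq_sub2l //.
by apply: leq_trans (mxrankM_maxr _ _) _; rewrite mxrank_tr mxrank_map.
Qed.

Lemma gf_refl : nondeg pf -> forall u v, gf u v = 0 -> gf v u = 0.
Proof.
move=> ndg u v; rewrite /gf /Nm /sig; case E: pf ndg => [M|M|s M] /=.
- move=> _ h0; rewrite !map_idr in h0 *; rewrite trE linearD /= trmxK addrC; exact: h0.
- case=> hT _ h0; rewrite !map_idr in h0 *.
  by rewrite trE hT mulmxN mulNmx mxE h0 oppr0.
- case=> hs [_ [hM _]] h0.
  have : (map_mx s (u *m M *m (map_mx s v)^T)) 0 0 = 0 by rewrite mxE h0 rmorph0.
  rewrite !map_mxM -map_trmx -hM.
  have -> : map_mx s (map_mx s v) = v.
    by apply/matrixP => i j; rewrite !mxE hs.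
  by rewrite -trE.
Qed.

Lemma ti_mono m1 m2 (V : 'M[F]_(m1, n)) (U : 'M[F]_(m2, n)) :
  (V <= U)%MS -> tot_iso pf U -> tot_iso pf V.
Proof.
move=> sVU; case: pf => [M|M|s M] /= /forallP H; apply/forallP => u.
- by apply/implyP => su; apply: (implyP (H u)); exact: submx_trans sVU.
- apply/forallP => v; apply/implyP => su; apply/implyP => sv.
  move/forallP: (H u) => /(_ v) /implyP /(_ (submx_trans su sVU)) /implyP.
  by apply; exact: submx_trans sVU.
- apply/forallP => v; apply/implyP => su; apply/implyP => sv.
  move/forallP: (H u) => /(_ v) /implyP /(_ (submx_trans su sVU)) /implyP.
  by apply; exact: submx_trans sVU.
Qed.

Lemma ti_eq m1 m2 (V : 'M[F]_(m1, n)) (U : 'M[F]_(m2, n)) :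
  (V :=: U)%MS -> tot_iso pf V = tot_iso pf U.
Proof.
move=> e; apply/idP/idP; apply: ti_mono; by rewrite e.
Qed.

Lemma ti_gf m (U : 'M[F]_(m, n)) u v :
  tot_iso pf U -> (u <= U)%MS -> (v <= U)%MS -> gf u v = 0.
Proof.
rewrite -pformE; case: pf => [M|M|s M] /= /forallP H su sv.
- have q0 : forall w, (w <= U)%MS -> qform M w = 0.
    by move=> w sw; apply/eqP; apply: (implyP (H w)).
  by rewrite !q0 ?subr0 // addmx_sub.
- by move/forallP: (H u) => /(_ v); rewrite su sv => /eqP.
- by move/forallP: (H u) => /(_ v); rewrite su sv => /eqP.
Qed.

Lemma ti_add m (U : 'M[F]_(m, n)) (x : 'rV[F]_n) : nondeg pf ->
  tot_iso pf U -> tot_iso pf x -> (U <= perpmx x)%MS -> tot_iso pf (U + x)%MS.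
Proof.
move=> ndg tU tx /perpmxP perp.
have key : forall w : 'rV[F]_n, (w <= U + x)%MS ->
    exists u y, [/\ w = u + y, (u <= U)%MS & (y <= x)%MS].
  move=> w /sub_addsmxP[[D1 D2] ->]; exists (D1 *m U), (D2 *m x).
  by split; rewrite ?submxMl.
have g1 : forall u y, (u <= U)%MS -> (y <= x)%MS -> pform pf u y = 0.
  by move=> u y su sy; rewrite pformE; apply: perp.
have g2 : forall u y, (u <= U)%MS -> (y <= x)%MS -> pform pf y u = 0.
  by move=> u y su sy; rewrite pformE; apply: (gf_refl ndg); apply: perp.
have g3 : forall u v, (u <= U)%MS -> (v <= U)%MS -> pform pf u v = 0.
  by move=> u v su sv; rewrite pformE; apply: ti_gf tU su sv.
have g4 : forall u v, (u <= x)%MS -> (v <= x)%MS -> pform pf u v = 0.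
  by move=> u v su sv; rewrite pformE; apply: ti_gf tx su sv.
have pD1 : forall u1 u2 v, pform pf (u1 + u2) v = pform pf u1 v + pform pf u2 v.
  by move=> *; rewrite !pformE gfDl.
have pD2 : forall u v1 v2, pform pf u (v1 + v2) = pform pf u v1 + pform pf u v2.
  by move=> *; rewrite !pformE gfDr.
move: tU tx g1 g2 g3 g4 pD1 pD2; case: pf => [M|M|s M] /= /forallP tU /forallP tx g1 g2 g3 g4 pD1 pD2.
- apply/forallP => w; apply/implyP => /key[u [y [-> su sy]]].
  have -> : qform M (u + y) = qform M u + qform M y +
      (qform M (u + y) - qform M u - qform M y) by ring.
  rewrite g1 // (eqP (implyP (tU u) su)) (eqP (implyP (tx y) sy)).
  by rewrite !addr0.
- apply/forallP => w1; apply/forallP => w2; apply/implyP => /key[u1 [y1 [-> s1 t1]]].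
  apply/implyP => /key[u2 [y2 [-> s2 t2]]].
  by rewrite pD1 !pD2 (g3 u1 u2) // (g1 u1 y2) // (g2 u2 y1) // (g4 y1 y2) // !addr0.
- apply/forallP => w1; apply/forallP => w2; apply/implyP => /key[u1 [y1 [-> s1 t1]]].
  apply/implyP => /key[u2 [y2 [-> s2 t2]]].
  by rewrite pD1 !pD2 (g3 u1 u2) // (g1 u1 y2) // (g2 u2 y1) // (g4 y1 y2) // !addr0.
Qed.

Section Geo.
Variables (r qe : nat).
Hypotheses (ndg : nondeg pf) (prk : polar_rank pf r).

Lemma rank_perp_row (x : 'rV[F]_n) : (n - 1 <= \rank (perpmx x))%N.
Proof.
apply: leq_trans (rank_perp x); apply: leq_sub2l; exact: rank_leq_row.
Qed.

Lemma gen_cap (G : 'M[F]_n) (x : 'rV[F]_n) : tot_iso pf G -> \rank G = r ->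
  tot_iso pf x -> ~~ (x <= G)%MS -> \rank (G :&: perpmx x)%MS = r.-1.
Proof.
move=> tG rG tx nxG.
have e := mxrank_sum_cap G (perpmx x).
have h1 := rank_leq_col (G + perpmx x)%MS.
have h2 := rank_perp_row x.
have h3 : (\rank (G :&: perpmx x)%MS < r)%N.
  rewrite ltnNge; apply/negP => hr.
  have sG : (G <= G :&: perpmx x)%MS.
    rewrite -(mxrank_leqif_sup (capmxSl G (perpmx x))).2.
    apply/eqP; apply/anti_leq; rewrite rG hr andbT -rG; exact: (mxrankS (capmxSl _ _)).
  have sGP : (G <= perpmx x)%MS by apply: submx_trans sG (capmxSr _ _).
  have t := ti_add ndg tG tx sGP.
  have := prk.2 _ t; rewrite rank_add_row nxG rG; lia.
have h4 := rank_leq_col G.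
lia.
Qed.

Lemma extend (U : 'M[F]_n) : tot_iso pf U -> (\rank U < r)%N ->
  exists x : 'rV[F]_n, [/\ tot_iso pf x, (U <= perpmx x)%MS & ~~ (x <= U)%MS].
Proof.
move=> tU rU; case: prk => [[G0 /andP[tG0 /eqP rG0]] hmax].
pose U' := (U :\: G0)%MS; pose D := (U :&: G0)%MS.
pose K := (G0 :&: perpmx U')%MS.
have rU' := mxrank_cap_compl U G0; rewrite -/U' -/D in rU'.
have rK : (r - \rank U' <= \rank K)%N.
  have e := mxrank_sum_cap G0 (perpmx U').
  have h1 := rank_leq_col (G0 + perpmx U')%MS.
  have h2 := rank_perp U'.
  rewrite -/K in e; lia.
have sKP : (K <= perpmx U)%MS.
  apply/perpmxP => a u sa su.
  have : (u <= U' + D)%MS by rewrite (addsmx_diff_cap_eq U G0).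
  case/sub_addsmxP => -[D1 D2] /= ->.
  rewrite gfDr.
  have sa1 : (a <= perpmx U')%MS by apply: submx_trans sa (capmxSr _ _).
  rewrite (perpP _ _ sa1 _ (submxMl _ _)) add0r.
  apply: (ti_gf tG0); first by apply: submx_trans sa (capmxSl _ _).
  by apply: submx_trans (submxMl _ _) (capmxSr _ _).
have nKU : ~~ (K <= U)%MS.
  apply/negP => sKU.
  have sKD : (K <= D)%MS by rewrite sub_capmx sKU capmxSl.
  have := mxrankS sKD; lia.
case/row_subPn: nKU => i nxU.
have sxK : (row i K <= K)%MS := row_sub i K.
exists (row i K); split => //.
  by apply: ti_mono tG0; apply: submx_trans sxK (capmxSl _ _).
apply/perpmxP => a b sa sb; apply: gf_refl => //.
by apply: (perpP _ _ (submx_trans sb (submx_trans sxK sKP))).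
Qed.

Hypothesis gp : gen_param pf r qe.

Definition genP (G : 'M[F]_n) := [&& is_subspace G, \rank G == r & tot_iso pf G].
Definition cnt (U : 'M[F]_n) := #|[set G in kspaces pf r | (U <= G)%MS]|.

Lemma cntE U : cnt U = (\sum_(G | genP G && (U <= G)%MS) 1)%N.
Proof. by rewrite /cnt -sum1_card; apply: eq_bigl => G; rewrite !inE. Qed.

Lemma subspace_eq2 (H : 'M[F]_n) m (C : 'M[F]_(m, n)) :
  is_subspace H -> (H <= C)%MS -> \rank C = \rank H -> <<C>>%MS = H.
Proof.
move=> /eqP sH sHC rC; rewrite -sH; apply/esym/genmxP.
by rewrite -(mxrank_leqif_eq sHC) rC.
Qed.

Lemma gen_add (H : 'M[F]_n) (x : 'rV[F]_n) : tot_iso pf H -> tot_iso pf x ->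
  (H <= perpmx x)%MS -> ~~ (x <= H)%MS -> \rank H = r.-1 -> (0 < r)%N ->
  genP <<(H + x)%MS>>%MS.
Proof.
move=> tH tx sHx nxH rH r0.
rewrite /genP /is_subspace genmx_id eqxx mxrank_gen rank_add_row nxH rH.
rewrite (ti_eq (genmxE _)) ti_add //=.
by apply/eqP; lia.
Qed.

Lemma cnt_hyp (H : 'M[F]_n) (x : 'rV[F]_n) : tot_iso pf H -> tot_iso pf x ->
  (H <= perpmx x)%MS -> ~~ (x <= H)%MS -> \rank H = r.-1 -> (0 < r)%N ->
  (\sum_(G | genP G && (H <= G)%MS && ~~ (x <= G)%MS) 1 = qe)%N.
Proof.
move=> tH tx sHx nxH rH r0.
have := gp tH rH; rewrite -sum1_card (bigID (fun G => (x <= G)%MS)) /=.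
rewrite (eq_bigl (pred1 <<(H + x)%MS>>%MS)); last first.
  move=> G; rewrite !inE /= -/(genP G); apply/idP/eqP.
    case/andP=> /andP[/and3P[sG /eqP rG tG] sHG] sxG.
    apply/esym; apply: subspace_eq => //; first by rewrite addsmx_sub sHG.
    rewrite rG rank_add_row nxH rH; lia.
  move=> ->; rewrite !genmxE addsmxSl addsmxSr andbT.
  rewrite andbT; exact: gen_add.
rewrite big_pred1_eq => /eqP; rewrite add1n eqSS => /eqP <-.
by apply: eq_bigl => G; rewrite !inE.
Qed.

Lemma c_step (U : 'M[F]_n) (x : 'rV[F]_n) : tot_iso pf U -> (\rank U < r)%N ->
  tot_iso pf x -> (U <= perpmx x)%MS -> ~~ (x <= U)%MS ->
  cnt U = (cnt <<(U + x)%MS>>%MS * (1 + qe * #|F| ^ (r - 1 - \rank U)))%N.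
Proof.
move=> tU rU tx sUx nxU.
pose W := <<(U + x)%MS>>%MS.
pose m := (r - 1 - \rank U)%N.
have r0 : (0 < r)%N by lia.
have ar : r.-1 = (\rank U + m)%N by rewrite /m; lia.
have ar2 : r = (\rank U + m).+1 by rewrite /m; lia.
have eW : forall G : 'M[F]_n, (W <= G)%MS = (U <= G)%MS && (x <= G)%MS.
  by move=> G; rewrite genmxE addsmx_sub.
rewrite !cntE (bigID (fun G => (x <= G)%MS)) /=.
have -> : (\sum_(G | (genP G && (U <= G)%MS) && (x <= G)%MS) 1 =
           \sum_(G | genP G && (W <= G)%MS) 1)%N.
  by apply: eq_bigl => G; rewrite eW andbA.
set cW := (\sum_(G | genP G && (W <= G)%MS) 1)%N.
pose hP (H : 'M[F]_n) := [&& is_subspace H, \rank H == r.-1, tot_iso pf H,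
   (U <= H)%MS, (H <= perpmx x)%MS & ~~ (x <= H)%MS].
rewrite (partition_big (fun G => <<(G :&: perpmx x)%MS>>%MS) hP); last first.
  move=> G /andP[/andP[/and3P[sG /eqP rG tG] sUG] nxG].
  rewrite /hP /is_subspace genmx_id eqxx mxrank_gen (gen_cap tG rG tx nxG) eqxx.
  rewrite (ti_eq (genmxE _)) (ti_mono (capmxSl _ _) tG) !genmxE sub_capmx sUG sUx.
  rewrite capmxSr /=; apply/negP => /(submx_trans)/(_ (capmxSl _ _)).
  by rewrite (negbTE nxG).
have eA : forall H, hP H ->
   (\sum_(G | (genP G && (U <= G)%MS && ~~ (x <= G)%MS) &&
        (<<(G :&: perpmx x)%MS>>%MS == H)) 1 = qe)%N.
  move=> H /and5P[sH /eqP rH tH sUH /andP[sHx nxH]].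
  rewrite -(cnt_hyp tH tx sHx nxH rH r0); apply: eq_bigl => G.
  apply/idP/idP.
    case/andP=> /andP[/andP[gG _] nxG] /eqP <-.
    by rewrite gG nxG genmxE capmxSl.
  case/andP=> /andP[gG sHG] nxG.
  rewrite gG nxG (submx_trans sUH sHG) /=.
  case/and3P: gG => _ /eqP rG tG.
  apply/eqP; apply: subspace_eq2 => //.
    by rewrite sub_capmx sHG.
  by rewrite (gen_cap tG rG tx nxG) rH.
rewrite (eq_bigr (fun _ => qe)) //.
have -> : (\sum_(i | hP i) qe = (\sum_(i | hP i) 1) * qe)%N.
  by rewrite big_distrl /=; apply: eq_bigr => *; rewrite mul1n.
rewrite (partition_big (fun H => <<(H + x)%MS>>%MS)
   (fun G => genP G && (W <= G)%MS)); last first.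
  move=> H /and5P[sH /eqP rH tH sUH /andP[sHx nxH]].
  rewrite gen_add //= eW !genmxE addsmxSr andbT.
  by rewrite (submx_trans sUH (addsmxSl _ _)).
rewrite (eq_bigr (fun _ => #|F| ^ m)%N); last first.
  move=> G /andP[/and3P[sG /eqP rG tG] sWG].
  have sUxG : (U + x <= G)%MS by apply: submx_trans sWG; rewrite genmxE.
  have sxG : (x <= G)%MS by apply: submx_trans (addsmxSr _ _) sUxG.
  rewrite -(count_hyp sUxG nxU); last by rewrite rG.
  apply: eq_bigl => H; apply/idP/idP.
    case/andP=> /and5P[sH /eqP rH tH sUH /andP[sHx nxH]] /eqP <-.
    by rewrite sH sUH nxH genmxE addsmxSl rH /= andbT ar.
  case/and5P=> sH sUH sHG /eqP rH nxH.
  have tH : tot_iso pf H by apply: ti_mono sHG tG.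
  have sHx : (H <= perpmx x)%MS.
    apply/perpmxP => a b sa sb; apply: (ti_gf tG).
      exact: submx_trans sa sHG.
    exact: submx_trans sb sxG.
  rewrite /hP sH tH sUH sHx nxH /=; apply/andP; split.
    by rewrite rH ar eqxx.
  apply/eqP; apply: subspace_eq => //; first by rewrite addsmx_sub sHG.
  by rewrite rank_add_row nxH rH rG ar2 addn1.
rewrite sum_nat_const /cW sum1_card /m.
ring.
Qed.

Definition cf d := (\prod_(i < d) (1 + qe * #|F| ^ i))%N.

Lemma c_formula_aux d : forall U : 'M[F]_n, tot_iso pf U ->
  (\rank U + d)%N = r -> cnt U = cf d.
Proof.
elim: d => [|d IH] U tU rU.
  rewrite cntE /cf big_ord0 (eq_bigl (pred1 <<U>>%MS)) ?big_pred1_eq //.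
  move=> G /=; apply/idP/eqP.
    case/andP=> /and3P[sG /eqP rG _] sUG.
    by apply/esym; apply: subspace_eq => //; rewrite rG -rU addn0.
  move=> ->; rewrite genmxE submx_refl andbT /genP /is_subspace genmx_id eqxx.
  by rewrite mxrank_gen (ti_eq (genmxE _)) tU -rU addn0 eqxx.
have rUr : (\rank U < r)%N by rewrite -rU addnS ltnS leq_addr.
have [x [tx sUx nxU]] := extend tU rUr.
rewrite (c_step tU rUr tx sUx nxU).
have tW : tot_iso pf <<(U + x)%MS>>%MS.
  rewrite (ti_eq (genmxE _)); apply: ti_add => //.
have rW : (\rank <<(U + x)%MS>>%MS + d)%N = r.
  by rewrite mxrank_gen rank_add_row nxU -rU addn1 addSnnS.
rewrite (IH _ tW rW) /cf big_ord_recr /=.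
by have -> : (r - 1 - \rank U)%N = d by rewrite -rU; lia.
Qed.

Lemma c_formula (U : 'M[F]_n) : tot_iso pf U -> (\rank U <= r)%N ->
  cnt U = cf (r - \rank U).
Proof. move=> tU rU; apply: c_formula_aux => //; lia. Qed.

End Geo.
End Polar2.

Section Main.
Variables (F : finFieldType) (n : nat) (pf : polar_form F n) (r qe k : nat).
Hypotheses (ndg : nondeg pf) (prk : polar_rank pf r) (gp : gen_param pf r qe).
Hypothesis (kr : (k <= r)%N).

Lemma in_perpE (p : 'rV[F]_n) (U : 'M[F]_n) : in_perp pf p U = (U <= perpmx pf p)%MS.
Proof.
apply/forallP/idP => [H|H u].
  apply/perpmxP => a b sa /submxP[D ->].
  rewrite (mx11_scalar D) mul_scalar_mx gfZr -pformE.
  by rewrite (eqP (implyP (H a) sa)) mulr0.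
apply/implyP => su; rewrite pformE; apply/eqP.
by apply: (perpmxP _ _ _ H) => //; exact: submx_refl.
Qed.

Lemma dc (Pu : pred 'M[F]_n) :
  (#|[set U in kspaces pf k | Pu U]| * cf F qe (r - k) =
   \sum_(G | genP pf r G) \sum_(U | [&& U \in kspaces pf k, Pu U & (U <= G)%MS]) 1)%N.
Proof.
rewrite -sum1_card big_distrl /=.
rewrite (eq_bigr (fun U => \sum_(G | genP pf r G && (U <= G)%MS) 1)%N); last first.
  move=> U; rewrite !inE => /andP[/and3P[sU /eqP rU tU] _].
  by rewrite mul1n -cntE -rU (c_formula ndg prk gp) // rU.
rewrite (exchange_big_dep (genP pf r)) /=; last by move=> U G _ /andP[].
apply: eq_bigr => G gG; apply: eq_bigl => U.
by rewrite gG /= [in LHS]inE andbA.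
Qed.

Lemma inner (G A : 'M[F]_n) (Pu : pred 'M[F]_n) : tot_iso pf A ->
  (forall U, Pu U && (U <= G)%MS = (U <= A)%MS) ->
  ((\sum_(U | [&& U \in kspaces pf k, Pu U & (U <= G)%MS]) 1) * Pr F k 0 k
     = Pr F (\rank A) 0 k)%N.
Proof.
move=> tA hU; rewrite big_distrl /= -(count_sub A k).
apply: eq_big => [U|U _]; last by rewrite mul1n.
rewrite inE hU -andbA; apply/and3P/and3P => [[sU /andP[rU _] sUA]|[sU sUA rU]].
  by split.
by split => //; rewrite rU /= (ti_mono sUA tA).
Qed.

Lemma tot0 : exists2 G : 'M[F]_n, tot_iso pf G & True.
Proof. by case: prk => -[G /andP[tG _]] _; exists G. Qed.

Lemma cnt0 : cnt pf r 0 = cf F qe r.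
Proof.
case: tot0 => G tG _.
by rewrite (c_formula ndg prk gp) ?mxrank0 ?subn0 // (ti_mono (sub0mx _ _) tG).
Qed.

Lemma dc_all :
  (#|kspaces pf k| * cf F qe (r - k) * Pr F k 0 k = cf F qe r * Pr F r 0 k)%N.
Proof.
have := dc predT; rewrite (eq_card (B := kspaces pf k)); last first.
  by move=> U; rewrite inE andbT.
move=> ->; rewrite big_distrl /=.
rewrite (eq_bigr (fun _ => Pr F r 0 k)); last first.
  move=> G /and3P[sG /eqP rG tG]; rewrite -rG; exact: (@inner G G predT tG).
rewrite sum_nat_const -cnt0 cntE sum1_card; congr (_ * _)%N.
apply: eq_card => G; rewrite [in RHS]unfold_in /=.
by apply/idP/andP => [h|[h _]]; [split => //; exact: sub0mx | exact: h].
Qed.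


Lemma sumc (P : pred 'M[F]_n) c :
  (\sum_(G | P G) c = (\sum_(G | P G) 1) * c)%N.
Proof. by rewrite big_distrl /=; apply: eq_bigr => *; rewrite mul1n. Qed.

Lemma dc_perp (p : 'rV[F]_n) : p != 0 -> tot_iso pf p ->
  (#|[set U in kspaces pf k | in_perp pf p U]| * cf F qe (r - k) * Pr F k 0 k =
   cf F qe (r - 1) * Pr F r 0 k + (cf F qe r - cf F qe (r - 1)) * Pr F (r - 1) 0 k)%N.
Proof.
move=> p0 tp.
rewrite dc big_distrl /= (bigID (fun G => (p <= G)%MS)) /=.
rewrite (eq_bigr (fun _ => Pr F r 0 k)); last first.
  move=> G /andP[/and3P[sG /eqP rG tG] spG]; rewrite -rG.
  apply: (@inner G G (in_perp pf p) tG) => U.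
  rewrite in_perpE; apply/andP/idP => [[]//|sUG]; split => //.
  apply/perpmxP => a b sa sb; apply: (ti_gf tG).
    exact: submx_trans sa sUG.
  exact: submx_trans sb spG.
rewrite [X in (_ + X)%N](eq_bigr (fun _ => Pr F (r - 1) 0 k)); last first.
  move=> G /andP[/and3P[sG /eqP rG tG] npG].
  have -> : (r - 1 = \rank (G :&: perpmx pf p)%MS)%N.
    by rewrite (gen_cap ndg prk tG rG tp npG) subn1.
  apply: (@inner G _ (in_perp pf p) (ti_mono (capmxSl _ _) tG)) => U.
  by rewrite in_perpE sub_capmx andbC.
rewrite (sumc _ (Pr F r 0 k)) (sumc _ (Pr F (r - 1) 0 k)).
have rp : \rank <<p>>%MS = 1%N by rewrite mxrank_gen rank_rV p0.
have tp' : tot_iso pf <<p>>%MS by rewrite (ti_eq pf (genmxE p)).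
have e1 : (\sum_(G | genP pf r G && (p <= G)%MS) 1 = cf F qe (r - 1))%N.
  have := c_formula ndg prk gp tp' (prk.2 _ tp'); rewrite rp cntE => <-.
  by apply: eq_bigl => G; rewrite genmxE.
have e2 : (\sum_(G | genP pf r G) 1 = cf F qe r)%N.
  rewrite -cnt0 cntE; apply: eq_bigl => G.
  by apply/idP/andP => [h|[h _]]; [split => //; exact: sub0mx | exact: h].
have e3 := e2; rewrite (bigID (fun G => (p <= G)%MS)) /= e1 in e3.
by rewrite e1 -e3 addKn.
Qed.

End Main.

Lemma Pr_rel (F : finFieldType) m k : (k <= m)%N ->
  (Pr F m 0 k * (#|F| ^ m.+1 - 1) = Pr F m.+1 0 k * (#|F| ^ (m.+1 - k) - 1))%N.
Proof.
case: k => [|j] hj; first by rewrite /Pr !big_ord0 subn0.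
have e1 : Pr F m 0 j.+1 = (Pr F m 0 j * (#|F| ^ m - #|F| ^ j))%N.
  by rewrite /Pr big_ord_recr.
have e2 : Pr F m.+1 0 j.+1 = ((#|F| ^ m.+1 - 1) * Pr F m.+1 1 j)%N.
  rewrite /Pr big_ord_recl expn0; congr (_ * _)%N.
rewrite e1 e2 Pr_shift subSS.
have -> : (#|F| ^ m - #|F| ^ j = #|F| ^ j * (#|F| ^ (m - j) - 1))%N.
  by rewrite mulnBr muln1 -expnD subnKC //; lia.
ring.
Qed.

Lemma final_alg (Q E N NH a b c1 P1 P2 A B : rat) :
  a != 0 -> b != 0 -> Q * A - 1 != 0 -> A * E + 1 != 0 ->
  N * a * b = c1 * (1 + E * A) * P1 ->
  NH * a * b = c1 * P1 + c1 * E * A * P2 ->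
  P2 * (Q * A - 1) = P1 * (B - 1) ->
  NH = (A * B * E + Q * A - A * E - 1) / ((Q * A - 1) * (A * E + 1)) * N.
Proof.
move=> a0 b0 d1 d2 hN hNH hP.
have eNH : NH = (c1 * P1 + c1 * E * A * P2) / (a * b).
  by rewrite -hNH; field; rewrite a0 b0.
have eN : N = c1 * (1 + E * A) * P1 / (a * b).
  by rewrite -hN; field; rewrite a0 b0.
have eP2 : P2 = P1 * (B - 1) / (Q * A - 1).
  by rewrite -hP; field.
rewrite eNH eN eP2; field.
by rewrite a0 b0 d1 d2.
Qed.

Theorem lemma5p2 (F : finFieldType) (n r k e2 qe : nat)
  (pf : polar_form F n) (p : 'rV[F]_n) :
  nondeg pf -> polar_rank pf r ->
  (qe ^ 2 = #|F| ^ e2)%N -> gen_param pf r qe ->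
  (k.+1 <= r)%N -> p != 0 -> tot_iso pf p ->
  (#|[set U in kspaces pf k | in_perp pf p U]|)%:R =
    ((#|F|%:R : rat) ^+ (2 * r - k - 1)%N * qe%:R + #|F|%:R ^+ r
       - #|F|%:R ^+ (r - 1)%N * qe%:R - 1)
    / ((#|F|%:R ^+ r - 1) * (#|F|%:R ^+ (r - 1)%N * qe%:R + 1))
    * (#|kspaces pf k|)%:R.
Proof.
move=> ndg prk _ gp kr p0 tp.
have kr' : (k <= r)%N by lia.
have hA := dc_all ndg prk gp kr'.
have hB := dc_perp ndg prk gp kr' p0 tp.
have hP := @Pr_rel F (r - 1) k (ltac:(lia)).
have er : (r - 1).+1 = r by lia.
rewrite er in hP.
have hc : cf F qe r = (cf F qe (r - 1) * (1 + qe * #|F| ^ (r - 1)))%N.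
  have cfS : forall d, cf F qe d.+1 = (cf F qe d * (1 + qe * #|F| ^ d))%N.
    by move=> d; rewrite /cf big_ord_recr.
  by rewrite -cfS er.
have q1 : (1 < #|F|)%N := card_finNzRing_gt1 F.
set q := #|F| in hA hB hP hc q1 *.
set N := #|kspaces pf k| in hA *.
set NH := #|[set U in kspaces pf k | in_perp pf p U]| in hB *.
set a := cf F qe (r - k) in hA hB *.
set b := Pr F k 0 k in hA hB *.
set c1 := cf F qe (r - 1) in hB hc *.
set c0 := cf F qe r in hA hB hc *.
set P1 := Pr F r 0 k in hA hB hP *.
set P2 := Pr F (r - 1) 0 k in hB hP *.
have hB' : (NH * a * b = c1 * P1 + c1 * qe * q ^ (r - 1) * P2)%N.
  by rewrite hB hc mulnDr muln1 addKn mulnA.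
have a0 : (0 < a)%N by apply: prodn_gt0 => i; rewrite add1n.
have b0 : (0 < b)%N by have := Pr_gt0 F 0 k; rewrite add0n.
have qr1 : (1 <= q ^ r)%N by rewrite expn_gt0; lia.
have qrk1 : (1 <= q ^ (r - k))%N by rewrite expn_gt0; lia.
have qr2 : (1 < q ^ r)%N by rewrite -{1}(expn0 q) ltn_exp2l //; lia.
have eQr : (q%:R : rat) ^+ r = q%:R * q%:R ^+ (r - 1).
  by rewrite -exprS er.
have eQ2 : (q%:R : rat) ^+ (2 * r - k - 1) = q%:R ^+ (r - 1) * q%:R ^+ (r - k).
  by rewrite -exprD; congr (_ ^+ _); lia.
rewrite eQ2 eQr.
apply: (@final_alg q%:R qe%:R N%:R NH%:R a%:R b%:R c1%:R P1%:R P2%:R).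
- by rewrite pnatr_eq0 -lt0n.
- by rewrite pnatr_eq0 -lt0n.
- rewrite -eQr -natrX subr_eq0 pnatr_eq1; lia.
- by rewrite -natrX -natrM natr1 pnatr_eq0.
- move: hA; rewrite hc => /(congr1 (fun x : nat => x%:R : rat)).
  by rewrite !natrM natrD !natrM natrX; apply.
- move: hB' => /(congr1 (fun x : nat => x%:R : rat)).
  by rewrite !natrM natrD !natrM !natrX; apply.
- move: hP => /(congr1 (fun x : nat => x%:R : rat)).
  by rewrite !natrM !natrB // !natrX eQr; apply.
Qed.
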